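(* For every nonnegative integer $n$, $$\sum_{k=0}^{\infty}(-1)^k(4k+1)\,\frac{(-2n)_k\,(-3n-\tfrac14)_k\,(\tfrac12)_k}{k!\,(2n+\tfrac32)_k\,(3n+\tfrac74)_k}=\left(\frac{2^2 3^3}{5^5}\right)^n\frac{(\tfrac{11}{12})_n(\tfrac{7}{12})_n(\tfrac54)_n^2}{(\tfrac{11}{20})_n(\tfrac{19}{20})_n(\tfrac{23}{20})_n(\tfrac{7}{20})_n}.$$ (The sum is finite, since $(-2n)_k=0$ for $k>2n$.)
   Context: $(a)_j=\Gamma(a+j)/\Gamma(a)=a(a+1)\cdots(a+j-1)$ denotes the rising factorial (Pochhammer symbol), with $(a)_0=1$. *)

(* Defs.v *)
From HB Require Import structures.
From mathcomp Require Import all_boot all_order all_algebra.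
Set Implicit Arguments. Unset Strict Implicit. Unset Printing Implicit Defensive.
Import Order.TTheory GRing.Theory Num.Theory.
Local Open Scope ring_scope.

Definition poch (R : pzRingType) (a : R) (j : nat) : R :=
  \prod_(i < j) (a + i%:R).

(* Main.v *)
Require Import Defs.
From HB Require Import structures.
From mathcomp Require Import all_boot all_order all_algebra.
From Stdlib Require Import Ring Field.
Import Order.TTheory GRing.Theory Num.Theory.
Local Open Scope ring_scope.

Lemma pochS (a : rat) k : poch a k.+1 = poch a k * (a + k%:R).
Proof. by rewrite /poch big_ord_recr. Qed.

Lemma poch0 (a : rat) : poch a 0 = 1.
Proof. by rewrite /poch big_ord0. Qed.

Lemma pochSl (a : rat) k : poch a k.+1 = a * poch (a + 1) k.
Proof.
rewrite /poch big_ord_recl /= addr0; congr (_ * _); apply: eq_bigr => i _.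
by rewrite /bump /= add1n -addrA nat1r.
Qed.

Lemma pos_addl (a b : rat) : 0 <= a -> 0 < b -> 0 < a + b.
Proof. by move=> ha hb; apply: (lt_le_trans hb); rewrite lerDr. Qed.
Lemma pos_addr (a b : rat) : 0 < a -> 0 <= b -> 0 < a + b.
Proof. by move=> ha hb; rewrite addrC; apply: pos_addl. Qed.

Lemma poch_gt0 (a : rat) k : 0 < a -> 0 < poch a k.
Proof.
move=> ha; rewrite /poch; apply: prodr_gt0 => i _.
by apply: pos_addr => //; apply: ler0n.
Qed.

Lemma poch_negz m j : (m < j)%N -> poch (- (m%:R : rat)) j = 0.
Proof.
move=> hmj; rewrite /poch (bigD1 (Ordinal hmj)) //= addrC subrr mul0r //.
Qed.

Notation RT := (GRing.PzSemiRing.sort rat_rat__canonical__GRing_PzSemiRing).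
Notation ADD := (@Algebra.add rat_rat__canonical__Algebra_BaseAddMagma).
Notation ZERO := (@Algebra.zero rat_rat__canonical__Algebra_BaseAddUMagma).
Notation OPP := (@Algebra.opp rat_rat__canonical__Algebra_BaseZmodule).
Notation MUL := (@GRing.mul rat_rat__canonical__GRing_PzSemiRing).
Notation ONE := (GRing.one rat_rat__canonical__GRing_PzSemiRing).
Notation INV := (@GRing.inv rat_rat__canonical__GRing_UnitRing).
Notation NATMUL := (@Algebra.natmul rat_rat__canonical__Algebra_BaseAddUMagma).
Notation EXP := (@GRing.exp rat_rat__canonical__GRing_PzSemiRing).
Notation POCH := (@poch rat_rat__canonical__GRing_PzRing).

Lemma rat_field_theory :
  @field_theory RT ZERO ONE ADD MUL (fun x y => ADD x (OPP y)) OPP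
    (fun x y => MUL x (INV y)) INV (@eq RT).
Proof.
constructor.
- constructor => //.
  + exact: add0r. + exact: addrC. + exact: addrA. + exact: mul1r. + exact: mulrC.
  + exact: mulrA. + exact: mulrDl. + exact: subrr.
- by apply/eqP; rewrite oner_eq0.
- by [].
- by move=> p /eqP hp; rewrite mulVf.
Qed.
Add Field ratF : rat_field_theory.

Lemma tor_lem (a b : rat) : @eq RT (MUL ONE a) (MUL ONE b) -> a = b.
Proof. by rewrite !mul1r. Qed.

Ltac normops :=
  repeat first [
    match goal with |- context [@Algebra.add ?I] => lazymatch I with rat_rat__canonical__Algebra_BaseAddMagma => fail | _ => change (@Algebra.add I) with ADD end end
  | match goal with |- context [@Algebra.zero ?I] => lazymatch I with rat_rat__canonical__Algebra_BaseAddUMagma => fail | _ => change (@Algebra.zero I) with ZERO end end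
  | match goal with |- context [@Algebra.opp ?I] => lazymatch I with rat_rat__canonical__Algebra_BaseZmodule => fail | _ => change (@Algebra.opp I) with OPP end end
  | match goal with |- context [@GRing.mul ?I] => lazymatch I with rat_rat__canonical__GRing_PzSemiRing => fail | _ => change (@GRing.mul I) with MUL end end
  | match goal with |- context [GRing.one ?I] => lazymatch I with rat_rat__canonical__GRing_PzSemiRing => fail | _ => change (GRing.one I) with ONE end end
  | match goal with |- context [@GRing.inv ?I] => lazymatch I with rat_rat__canonical__GRing_UnitRing => fail | _ => change (@GRing.inv I) with INV end end
  | match goal with |- context [@Algebra.natmul ?I] => lazymatch I with rat_rat__canonical__Algebra_BaseAddUMagma => fail | _ => change (@Algebra.natmul I) with NATMUL end end
  | match goal with |- context [@GRing.exp ?I] => lazymatch I with rat_rat__canonical__GRing_PzSemiRing => fail | _ => change (@GRing.exp I) with EXP end end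
  | match goal with |- context [@poch ?I] => lazymatch I with rat_rat__canonical__GRing_PzRing => fail | _ => change (@poch I) with POCH end end
  ].
Ltac nm := rewrite ?mulrS ?mulr0n ?exprS ?expr0.
Ltac rfield := nm; apply: tor_lem; normops; field.
Ltac rring := nm; apply: tor_lem; normops; ring.

Ltac pos := lazymatch goal with
 | |- is_true (0 < _ * _) => apply: mulr_gt0; pos
 | |- is_true (0 < _ + _) => first [apply: pos_addr; [pos|nneg] | apply: pos_addl; [nneg|pos]]
 | |- is_true (0 < _^-1) => rewrite invr_gt0; pos
 | |- is_true (0 < poch _ _) => apply: poch_gt0; pos
 | |- is_true (0 < 1) => exact: ltr01
 | |- is_true (0 < _ %:R) => by rewrite ltr0n ?fact_gt0
 | _ => first [assumption | (apply: poch_gt0; pos) | by [] ]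
end
with nneg := lazymatch goal with
 | |- is_true (0 <= _ * _) => apply: mulr_ge0; nneg
 | |- is_true (0 <= _ + _) => apply: addr_ge0; nneg
 | |- is_true (0 <= _^-1) => rewrite invr_ge0; nneg
 | |- is_true (0 <= _ %:R) => apply: ler0n
 | |- is_true (0 <= 1) => exact: ler01
 | |- is_true (0 <= 0) => exact: lexx
 | _ => apply/ltW; pos
end.
Ltac disch := repeat split; apply/eqP; apply: lt0r_neq0; pos.


Definition Tk (m : nat) (c d : rat) (k : nat) : rat :=
  (-1) ^+ k * (4 * k%:R + 1) * (poch (- (m%:R)) k * poch c k * poch (1/2) k)
  / (k`!%:R * poch (m%:R + 3/2) k * poch d k).
Definition Sm (m : nat) (d : rat) : rat := poch (3/2) m / poch d m.
Definition Gk (m : nat) (c d : rat) (k : nat) : rat :=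
  2 * k%:R * (-1) ^+ k * poch (- (m%:R)) k.-1 * poch c k * (k%:R + 1/2 - c) * poch (1/2) k
  / (k`!%:R * poch (m%:R + 3/2) k * poch d k * Sm m d).

Lemma pochN1 m j : poch (- (m.+1%:R) : rat) j.+1 = - m.+1%:R * poch (- m%:R) j.
Proof. by rewrite pochSl -natr1 opprD addrNK. Qed.

Lemma pochM1 m j : poch ((m.+1)%:R + 3/2 : rat) j.+1 = poch (m%:R + 3/2) j.+2 / (m%:R + 3/2).
Proof.
rewrite (pochSl (m%:R + 3/2)) (mulrC (m%:R + 3/2)) mulfK; last by apply: lt0r_neq0; pos.
by rewrite addrAC natr1.
Qed.

Lemma ptw m d k : 0 < d ->
  Tk m.+1 (3/2 - d) d k / Sm m.+1 d - Tk m (3/2 - d) d k / Sm m d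
  = Gk m (3/2 - d) d k.+1 - Gk m (3/2 - d) d k.
Proof.
move=> hd.
case: k => [|j].
  rewrite /Tk /Gk /Sm /= !pochS !poch0 !factS /= !expr0 !exprS !expr0.
  rfield. disch.
rewrite /Tk /Gk /Sm /= pochN1 pochM1 !pochS !factS !natrM !exprS.
Time rfield.
disch.
Qed.

Lemma S_gt0 m d : 0 < d -> 0 < Sm m d.
Proof. by move=> hd; rewrite /Sm; pos. Qed.

Lemma tele m d M : 0 < d ->
  \sum_(k < M) (Tk m.+1 (3/2 - d) d k / Sm m.+1 d - Tk m (3/2 - d) d k / Sm m d)
  = Gk m (3/2 - d) d M.
Proof.
move=> hd; elim: M => [|M IH].
  by rewrite big_ord0 /Gk mulr0n mulr0 !mul0r.
rewrite big_ord_recr /= IH ptw //.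
by rewrite addrC subrK.
Qed.

Lemma lemA m d M : 0 < d -> (m < M)%N ->
  \sum_(k < M) Tk m (3/2 - d) d k = Sm m d.
Proof.
move=> hd; elim: m M => [|m IH] M hM.
  case: M hM => [//|M] _.
  rewrite big_ord_recl big1 => [|i _]; last first.
    by rewrite /Tk /= poch_negz // !(mulr0, mul0r).
  rewrite /Tk /Sm !poch0 /= addr0. rfield. disch.
have h := tele m d M hd.
have hG : Gk m (3/2 - d) d M = 0.
  rewrite /Gk poch_negz; first by rewrite !(mulr0, mul0r).
  by case: M hM {h} => [|M] //= /ltnW.
rewrite hG sumrB -!mulr_suml IH ?(ltn_trans (ltnSn m)) // divff in h; last first.
  by apply: lt0r_neq0; apply: S_gt0.
move/eqP: h; rewrite subr_eq0 => /eqP h.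
rewrite -[LHS](divfK (x := Sm m.+1 d)) ?h ?mul1r //.
by apply: lt0r_neq0; apply: S_gt0.
Qed.


Definition RHSn (n : nat) : rat := ((2^+2 * 3^+3) / 5^+5) ^+ n *
    (poch (11/12) n * poch (7/12) n * poch (5/4) n ^+ 2)
    / (poch (11/20) n * poch (19/20) n * poch (23/20) n * poch (7/20) n).

Lemma lemB n : poch (3/2) (n.*2) / poch (3 * n%:R + 7/4) (n.*2) = RHSn n.
Proof.
elim: n => [|n IH].
  rewrite /RHSn !poch0 !expr0. rfield. disch.
have ha : 0 < (3 * n%:R + 7/4 : rat) by pos.
set a := 3 * n%:R + 7/4 in IH ha *.
have E5 : poch a (n.*2).+4.+1 = a * ((a + 1) * ((a + 1 + 1) * poch (a + 1 + 1 + 1) (n.*2).+2)).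
  by rewrite pochSl; rewrite pochSl; rewrite pochSl.
have hA : poch (a + 1 + 1 + 1) (n.*2).+2 = poch a (n.*2).+4.+1 / (a * (a+1) * (a+1+1)).
  rewrite E5. rfield. disch.
have IH' : poch (3/2) (n.*2) = RHSn n * poch a (n.*2).
  rewrite -IH. rfield. disch.
have d2 : (n.*2)%:R = 2 * n%:R :> rat by rewrite -mul2n natrM.
rewrite doubleS (_ : 3 * n.+1%:R + 7/4 = a + 1 + 1 + 1); last by rewrite /a; rring.
rewrite hA /RHSn !pochS IH' /RHSn.
rewrite !exprS !expr0 !d2 /a.
move: (((2^+2 * 3^+3) / 5^+5 : rat) ^+ n) => K.
nm. rewrite !d2. Time rfield.
Time disch.
Qed.


Theorem theorem9 (n : nat) (N : nat) (hN : (2 * n <= N)%N) :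
  \sum_(k < N.+1)
     (-1) ^+ k * (4 * k%:R + 1) *
     (poch (- (2 * n%:R)) k * poch (- (3 * n%:R) - 1/4) k * poch (1/2) k)
     / (k`!%:R * poch (2 * n%:R + 3/2) k * poch (3 * n%:R + 7/4) k)
  = ((2^+2 * 3^+3) / 5^+5) ^+ n *
    (poch (11/12) n * poch (7/12) n * poch (5/4) n ^+ 2)
    / (poch (11/20) n * poch (19/20) n * poch (23/20) n * poch (7/20) n)
  :> rat.
Proof.
have hd : 0 < (3 * n%:R + 7/4 : rat) by pos.
have hlt : (n.*2 < N.+1)%N by rewrite ltnS -mul2n.
have hA := lemA (n.*2) (3 * n%:R + 7/4) N.+1 hd hlt.
rewrite /Sm lemB in hA; apply: (etrans _ hA).
have d2 : (n.*2)%:R = 2 * n%:R :> rat by rewrite -mul2n natrM.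
have e : 3/2 - (3 * n%:R + 7/4) = - (3 * n%:R) - 1/4 :> rat by rfield; disch.
apply: eq_bigr => k _.
by rewrite /Tk d2 e.
Qed.
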